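(* Let $\mathbf G=(\mathcal X,\mathcal E)$ be a directed graph with $\mathcal X=\{1,\dots,n\}$, with edge lengths $l_{ij}\ge0$ for $ij\in\mathcal E$ and $l_{ij}=+\infty$ for $ij\notin\mathcal E$. Fix $N\ge1$ and nodes $x_0,x_N$, and let $\mathcal X^{N+1}(x_0,x_N)$ denote the set of feasible paths $y=(y_0,\dots,y_N)$ with $y_0=x_0$, $y_N=x_N$, assumed nonempty. For $T>0$ let $P_T^*(x)=Z(T)^{-1}\exp(-l(x)/T)$, $Z(T)=\sum_{x}\exp(-l(x)/T)$, be the Boltzmann distribution on $\mathcal X^{N+1}$, where $l(x)=\sum_{t=0}^{N-1}l_{x_tx_{t+1}}$, and let $\mathfrak M^*_T$ be the minimizer of $\mathbb D(P\|P_T^* )$ over probability measures $P$ on $\mathcal X^{N+1}$ with initial marginal $\delta_{x_0}$ and final marginal $\delta_{x_N}$. Let $l_m(x_0,x_N)=\min_{y\in\mathcal X^{N+1}(x_0,x_N)}l(y)$. Then: (i) as $T\searrow0$, $\mathfrak M^*_T$ concentrates on the minimum length paths in $\mathcal X^{N+1}(x_0,x_N)$: if $y\in\mathcal X^{N+1}(x_0,x_N)$ has $l(y)>l_m(x_0,x_N)$, then $\mathfrak M^*_T(y)\to0$ as $T\searrow0$; (ii) as $T\nearrow+\infty$, $\mathfrak M^*_T$ tends to the uniform distribution on $\mathcal X^{N+1}(x_0,x_N)$; (iii) if $\mathcal X^{N+1}(x_0,x_N)$ is not a singleton and $l$ is not constant on it, then for each $\bar L$ with $l_m(x_0,x_N)\le\bar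 L\le\frac{1}{|\mathcal X^{N+1}(x_0,x_N)|}\sum_{y\in\mathcal X^{N+1}(x_0,x_N)}l(y)$ there is a unique $T\in[0,+\infty]$ such that $L(\mathfrak M^*_T)=\bar L$, and this $\mathfrak M^*_T$ solves the problem of maximizing the entropy $S(P)$ over probability measures $P$ on $\mathcal X^{N+1}$ with initial marginal $\delta_{x_0}$, final marginal $\delta_{x_N}$ and $L(P)=\bar L$.
   Context: A path $x=(x_0,\dots,x_N)$ is feasible if $x_tx_{t+1}\in\mathcal E$ for all $t$. $\delta_{x'}$ denotes the point mass at node $x'$. Relative entropy $\mathbb D(P\|Q)=\sum_xP(x)\log\frac{P(x)}{Q(x)}$ (with $+\infty$ if $\mathrm{Supp}P\not\subseteq\mathrm{Supp}Q$, and $0\log0=0$). Average path length of $P$: $L(P)=\sum_x l(x)P(x)$ with $(+\infty)\cdot0=0$. Entropy: $S(P)=-\sum_xP(x)\ln P(x)$. In (iii), $\mathfrak M^*_0$ and $\mathfrak M^*_{+\infty}$ are understood as the limits of $\mathfrak M^*_T$ as $T\searrow0$ and $T\nearrow+\infty$ respectively. *)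

(* Defs.v *)
From HB Require Import structures.
From mathcomp Require Import all_boot all_order all_algebra.
From mathcomp Require Import all_classical all_reals all_analysis.
Set Implicit Arguments. Unset Strict Implicit. Unset Printing Implicit Defensive.
Import Order.TTheory GRing.Theory Num.Theory.
Import numFieldNormedType.Exports.
Local Open Scope ring_scope.
Local Open Scope classical_set_scope.

Section Paths.
Variables (R : realType) (n N : nat).
Local Notation path := {ffun 'I_N.+1 -> 'I_n}.

Definition feasible (E : rel 'I_n) (x : path) : bool :=
  [forall t : 'I_N, E (x (widen_ord (leqnSn N) t)) (x (lift ord0 t))].

Definition lfin (l : 'I_n -> 'I_n -> R) (x : path) : R :=
  \sum_(t < N) l (x (widen_ord (leqnSn N) t)) (x (lift ord0 t)).

Definition lpath (E : rel 'I_n) (l : 'I_n -> 'I_n -> R) (x : path) : \bar R :=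
  if feasible E x then (lfin l x)%:E else +oo%E.

Definition paths_between (E : rel 'I_n) (x0 xN : 'I_n) : {set path} :=
  [set x : path | [&& feasible E x, x ord0 == x0 & x ord_max == xN]].

(* exp(-l(x)/T), with exp(-oo) = 0 *)
Definition weight (E : rel 'I_n) (l : 'I_n -> 'I_n -> R) (T : R) (x : path) : R :=
  if feasible E x then expR (- lfin l x / T) else 0.

Definition Zpart E l T : R := \sum_(x : path) weight E l T x.

Definition boltz E l T : {ffun path -> R} := [ffun x => weight E l T x / Zpart E l T].

Definition is_prob (P : {ffun path -> R}) : Prop :=
  (forall x, 0 <= P x) /\ \sum_(x : path) P x = 1.

Definition marginal (P : {ffun path -> R}) (t : 'I_N.+1) (i : 'I_n) : R :=
  \sum_(x : path | x t == i) P x.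

Definition admissible (x0 xN : 'I_n) (P : {ffun path -> R}) : Prop :=
  is_prob P /\ forall i, marginal P ord0 i = (i == x0)%:R /\ marginal P ord_max i = (i == xN)%:R.

(* relative entropy, +oo if Supp P not included in Supp Q, 0 log 0 = 0 *)
Definition KL (P Q : {ffun path -> R}) : \bar R :=
  if [forall x, (P x != 0) ==> (Q x != 0)]
  then (\sum_(x : path) P x * ln (P x / Q x))%:E else +oo%E.

Definition KL_minimizer (x0 xN : 'I_n) (Q P : {ffun path -> R}) : Prop :=
  admissible x0 xN P /\ forall P', admissible x0 xN P' -> (KL P Q <= KL P' Q)%E.

(* average path length L(P), with (+oo) * 0 = 0 *)
Definition avg_len E l (P : {ffun path -> R}) : \bar R :=
  (\sum_(x : path) (lpath E l x * (P x)%:E))%E.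

Definition entropy (P : {ffun path -> R}) : R := - \sum_(x : path) P x * ln (P x).

Definition lmin E l x0 xN : \bar R :=
  \big[Order.min/+oo%E]_(y in paths_between E x0 xN) (lfin l y)%:E.

(* M*_T for T in [0,+oo], T = 0 and T = +oo meaning the limits *)
Definition Mext (M : R -> {ffun path -> R}) (T : \bar R) : {ffun path -> R} :=
  match T with
  | EFin r => if r == 0 then [ffun y => lim (M t y @[t --> 0^'+])] else M r
  | +oo%E => [ffun y => lim (M t y @[t --> +oo])]
  | -oo%E => M 0
  end.

End Paths.

(* Main.v *)
Require Import Defs.
From HB Require Import structures.
From mathcomp Require Import all_boot all_order all_algebra.
From mathcomp Require Import all_classical all_reals all_analysis.
From mathcomp Require Import ring lra.
Import Order.TTheory GRing.Theory Num.Theory.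
Import numFieldNormedType.Exports.
Local Open Scope ring_scope.
Local Open Scope classical_set_scope.
Section Gen.
Variable R : realType.

Lemma ln_le_sub1 (u : R) : 0 < u -> ln u <= u - 1.
Proof.
move=> u0; have := expR_ge1Dx (ln u); rewrite lnK ?posrE //; lra.
Qed.

Lemma ln_lt_sub1 (u : R) : 0 < u -> u != 1 -> ln u < u - 1.
Proof.
move=> u0 u1; have : ln u != 0 by rewrite ln_eq0.
move=> /expR_gt1Dx; rewrite lnK ?posrE //; lra.
Qed.

Lemma sum_ge_term (I : finType) (A : pred I) (F : I -> R) y0 :
  A y0 -> (forall y, A y -> 0 <= F y) -> F y0 <= \sum_(y | A y) F y.
Proof.
move=> yA F0; rewrite (bigD1 y0) //= lerDl; apply: sumr_ge0 => i /andP[iA _].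
exact: F0.
Qed.

Lemma gibbs (I : finType) (P Q : I -> R) :
  (forall x, 0 <= P x) -> (forall x, 0 <= Q x) -> \sum_x P x = 1 -> \sum_x Q x = 1 ->
  (forall x, P x != 0 -> 0 < Q x) ->
  \sum_x P x * ln (Q x) <= \sum_x P x * ln (P x) /\
  (\sum_x P x * ln (Q x) = \sum_x P x * ln (P x) -> forall x, P x = Q x).
Proof.
move=> P0 Q0 sP sQ PQ.
pose d x := (Q x - P x) - (P x * ln (Q x) - P x * ln (P x)).
have d0 x : 0 <= d x.
  rewrite /d; have [Px0|Pxn0] := eqVneq (P x) 0.
    by rewrite Px0 !mul0r subr0 subrr subr0.
  have Pp : 0 < P x by rewrite lt0r Pxn0 P0.
  have Qp := PQ _ Pxn0.
  rewrite -mulrBr -ln_div ?posrE // subr_ge0.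
  have := @ln_le_sub1 _ (divr_gt0 Qp Pp) => h.
  rewrite -(ler_pM2l Pp) in h; apply: (le_trans h).
  by rewrite mulrBr mulr1 mulrCA divff // mulr1.
have sd : \sum_x d x = - (\sum_x P x * ln (Q x) - \sum_x P x * ln (P x)).
  by rewrite /d !sumrB sQ sP subrr sub0r.
split.
  have : 0 <= \sum_x d x by apply: sumr_ge0 => i _; exact: d0.
  rewrite sd; lra.
move=> heq x.
have : \sum_x d x = 0 by rewrite sd heq subrr oppr0.
move/eqP; rewrite psumr_eq0; last by move=> i _; exact: d0.
move=> /allP /(_ x (mem_index_enum x)) /implyP /(_ isT) /eqP.
rewrite /d; have [Px0|Pxn0] := eqVneq (P x) 0.
  by rewrite Px0 !mul0r subr0 subrr subr0 => ->.
have Pp : 0 < P x by rewrite lt0r Pxn0 P0.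
have Qp := PQ _ Pxn0.
have [/eqP|ne] := eqVneq (Q x / P x) 1.
  by move=> /eqP /divr1_eq ->.
rewrite -mulrBr -ln_div ?posrE // => h.
have := @ln_lt_sub1 _ (divr_gt0 Qp Pp) ne.
rewrite -(ltr_pM2l Pp) mulrBr mulr1 mulrCA divff // mulr1.
move: h; lra.
Qed.

Lemma sym_ineq (I : finType) (A : pred I) (a e1 e2 : I -> R) :
  (forall y z, A y -> A z -> a z < a y -> e1 z * e2 y < e1 y * e2 z) ->
  (exists y z, [/\ A y, A z & a y != a z]) ->
  (\sum_(y | A y) a y * e2 y) * (\sum_(z | A z) e1 z) <
  (\sum_(y | A y) a y * e1 y) * (\sum_(z | A z) e2 z).
Proof.
move=> H [y0 [z0 [y0A z0A ne]]].
rewrite -subr_gt0 !mulr_suml.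
have -> : \sum_(i | A i) a i * e1 i * \sum_(z | A z) e2 z -
          \sum_(i | A i) a i * e2 i * \sum_(z | A z) e1 z =
          \sum_(y | A y) \sum_(z | A z) a y * (e1 y * e2 z - e1 z * e2 y).
  rewrite -sumrB; apply: eq_bigr => y _; rewrite !mulr_sumr -sumrB.
  by apply: eq_bigr => z _; ring.
set D := \sum_(y | A y) _.
have D2 : D + D = \sum_(y | A y) \sum_(z | A z) (a y - a z) * (e1 y * e2 z - e1 z * e2 y).
  rewrite {2}/D exchange_big /D -big_split /=; apply: eq_bigr => y _.
  rewrite -big_split /=; apply: eq_bigr => z _.
  by ring.
have t0 y z : y \in A -> z \in A -> 0 <= (a y - a z) * (e1 y * e2 z - e1 z * e2 y).
  move=> yA zA; case: (ltrgtP (a y) (a z)) => h.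
  - have := H z y zA yA h => h2; nra.
  - have := H y z yA zA h => h2; nra.
  - by rewrite h subrr mul0r.
have t1 : 0 < (a y0 - a z0) * (e1 y0 * e2 z0 - e1 z0 * e2 y0).
  case: (ltrgtP (a y0) (a z0)) ne => h //= _.
  - have := H z0 y0 z0A y0A h => h2; nra.
  - have := H y0 z0 y0A z0A h => h2; nra.
suff : 0 < D + D by lra.
rewrite D2; apply: (lt_le_trans t1).
set t := fun y z => (a y - a z) * (e1 y * e2 z - e1 z * e2 y).
have s1 : t y0 z0 <= \sum_(z | A z) t y0 z.
  by apply: sum_ge_term z0A _ => z zA; exact: t0.
apply: (le_trans s1); apply: (@sum_ge_term _ A (fun y => \sum_(z | A z) t y z) y0 y0A).
by move=> y yA; apply: sumr_ge0 => z zA; exact: t0.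
Qed.
End Gen.
Lemma cvg_sumr (R : realType) (T : Type) (F : set_system T) (FF : Filter F) (I : finType)
  (A : pred I) (f : I -> T -> R) (a : I -> R) :
  (forall i, A i -> f i x @[x --> F] --> a i) ->
  \sum_(i | A i) f i x @[x --> F] --> \sum_(i | A i) a i.
Proof. by move=> h; apply: cvg_big => //; exact: add_continuous. Qed.

Set Implicit Arguments.
Section Main.
Variables (R : realType) (n N : nat) (E : rel 'I_n) (l : 'I_n -> 'I_n -> R) (x0 xN : 'I_n).
Local Notation path := {ffun 'I_N.+1 -> 'I_n}.
Local Notation S := (paths_between N E x0 xN).
Local Notation lf := (@lfin R n N l).
Hypothesis l0 : forall i j, E i j -> 0 <= l i j.
Variable zm : path.
Hypothesis zmS : zm \in S.
Hypothesis zm_min : forall y, y \in S -> lf zm <= lf y.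

Lemma inS (x : path) : x \in S = [&& feasible E x, x ord0 == x0 & x ord_max == xN].
Proof. by rewrite inE. Qed.

Lemma lf_ge0 (x : path) : feasible E x -> 0 <= lf x.
Proof.
move=> /forallP fx; apply: sumr_ge0 => t _; exact: l0.
Qed.

Lemma S_card : (0 < #|S|)%N.
Proof. by apply/card_gt0P; exists zm. Qed.

Definition ew (T : R) (y : path) : R := expR (- lf y / T).
Definition ZS T := \sum_(z in S) ew T z.
Lemma ZS_gt0 T : 0 < ZS T.
Proof.
rewrite /ZS (bigD1 zm) //= ltr_pwDl ?expR_gt0 //.
by apply: sumr_ge0 => i _; rewrite expR_ge0.
Qed.

Definition G T : {ffun path -> R} := [ffun y => if y \in S then ew T y / ZS T else 0].
Definition U (A : {set path}) : {ffun path -> R} := [ffun y => if y \in A then (#|A|%:R)^-1 else 0].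

Lemma sum_ifS (A : {set path}) (f : path -> R) :
  \sum_x (if x \in A then f x else 0) = \sum_(x in A) f x.
Proof. by rewrite [RHS]big_mkcond. Qed.

Lemma G_prob T : is_prob (G T).
Proof.
split.
  move=> x; rewrite ffunE; case: ifP => _ //.
  by rewrite divr_ge0 ?expR_ge0 // ltW // ZS_gt0.
under eq_bigr do rewrite ffunE.
by rewrite sum_ifS -mulr_suml divff // gt_eqF // ZS_gt0.
Qed.

Lemma G_pos T x : x \in S -> 0 < G T x.
Proof. by move=> xS; rewrite ffunE xS divr_gt0 ?expR_gt0 ?ZS_gt0. Qed.

Lemma G_supp T x : G T x != 0 -> x \in S.
Proof. by rewrite ffunE; case: ifP => // _; rewrite eqxx. Qed.

Lemma U_prob (A : {set path}) : (0 < #|A|)%N -> is_prob (U A).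
Proof.
move=> A0; split.
  by move=> x; rewrite ffunE; case: ifP => _ //; rewrite invr_ge0 ler0n.
under eq_bigr do rewrite ffunE.
by rewrite sum_ifS sumr_const -[_^-1 *+ _]mulr_natr mulVf // pnatr_eq0 -lt0n.
Qed.

Lemma U_supp (A : {set path}) x : U A x != 0 -> x \in A.
Proof. by rewrite ffunE; case: ifP => // _; rewrite eqxx. Qed.

Lemma supp_adm (P : {ffun path -> R}) : is_prob P -> (forall x, P x != 0 -> x \in S) ->
  admissible x0 xN P.
Proof.
move=> [P0 P1] PS; split => // i.
have key (t : 'I_N.+1) (c : 'I_n) : (forall x, x \in S -> x t = c) ->
    marginal P t i = (i == c)%:R.
  move=> hc; rewrite /marginal; have [->|ne] := eqVneq i c.
    rewrite -P1 [RHS](bigID (fun x : path => x t == c)) /=.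
    rewrite [X in _ = _ + X]big1 ?addr0 //.
    move=> x /negP xc; apply/eqP; apply/negPn/negP => /PS /hc /eqP; exact: xc.
  rewrite big1 // => x /eqP xt; apply/eqP; apply/negPn/negP => /PS /hc.
  by rewrite xt => /eqP; rewrite (negbTE ne).
by split; apply: key => x; rewrite inS => /and3P[_ /eqP ? /eqP ?].
Qed.

Lemma adm_supp (P : {ffun path -> R}) x : admissible x0 xN P -> P x != 0 ->
  x ord0 = x0 /\ x ord_max = xN.
Proof.
move=> [[P0 P1] hm] Px.
have key (t : 'I_N.+1) c : marginal P t (x t) = (x t == c)%:R -> x t = c.
  move=> h; apply/eqP; apply/negPn/negP => ne; move: h; rewrite (negbTE ne) /marginal.
  move=> /eqP; rewrite psumr_eq0; last by move=> ? _; exact: P0.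
  move=> /allP /(_ x (mem_index_enum x)); rewrite eqxx /= => /eqP h.
  by move: Px; rewrite h eqxx.
by split; apply: key; [exact: (hm _).1 | exact: (hm _).2].
Qed.


Lemma Z_ge T : ZS T <= Zpart N E l T.
Proof.
rewrite /Zpart (bigID (fun x => x \in S)) /=.
have -> : \sum_(x | x \in S) weight E l T x = ZS T.
  rewrite /ZS; apply: eq_bigr => x xS.
  by move: xS; rewrite inS /weight => /and3P[-> _ _].
by rewrite lerDl; apply: sumr_ge0 => x _; rewrite /weight; case: ifP => // _.
Qed.

Lemma M_eq (M : R -> {ffun path -> R}) T : 0 < T ->
  KL_minimizer x0 xN (boltz N E l T) (M T) -> M T = G T.
Proof.
move=> T0 [Madm Mmin].
set Q := boltz N E l T; set Z := Zpart N E l T; set c := ZS T / Z.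
have Z0 : 0 < Z by apply: lt_le_trans (ZS_gt0 T) (Z_ge T).
have c0 : 0 < c by rewrite divr_gt0 // ZS_gt0.
have QG x : x \in S -> Q x = G T x * c.
  move=> xS; rewrite !ffunE xS /weight.
  move: (xS); rewrite inS => /and3P[-> _ _]; rewrite /c -/(ew T x).
  have := ZS_gt0 T => h; rewrite -/Z; field; rewrite !gt_eqF //.
have GKL : KL (G T) Q = (- ln c)%:E.
  rewrite /KL; have -> : [forall x, (G T x != 0) ==> (Q x != 0)] = true.
    apply/forallP => x; apply/implyP => /G_supp xS; rewrite QG //.
    by rewrite mulf_neq0 // gt_eqF // ?G_pos.
  congr EFin; rewrite (eq_bigr (fun x => G T x * - ln c)).
    by rewrite -mulr_suml (G_prob T).2 mul1r.
  move=> x _; have [xS|xS] := boolP (x \in S).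
    have Gp := G_pos T xS.
    rewrite QG // (_ : G T x / (G T x * c) = c^-1); last by field; rewrite !gt_eqF.
    by rewrite lnV // posrE.
  by rewrite ffunE (negbTE xS) !mul0r.
have := Mmin _ (supp_adm (G_prob T) (@G_supp T)); rewrite GKL /KL.
case: ifP => [/forallP hM | _] //; rewrite lee_fin => hle.
have MS x : M T x != 0 -> x \in S.
  move=> hx; have := implyP (hM x) hx; rewrite ffunE /weight; case: ifP => fx; last first.
    by rewrite mul0r eqxx.
  by move=> _; have [h1 h2] := adm_supp x Madm hx; rewrite inS fx h1 h2 !eqxx.
have [M0 M1] := Madm.1.
have eq1 : \sum_x M T x * ln (M T x / Q x) =
   \sum_x M T x * ln (M T x) - \sum_x M T x * ln (G T x) - ln c.
  rewrite -[ln c]mul1r -M1 mulr_suml -!sumrB; apply: eq_bigr => x _.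
  have [Mx0|Mxn0] := eqVneq (M T x) 0; first by rewrite Mx0 !mul0r !subr0.
  have Mp : 0 < M T x by rewrite lt0r Mxn0 M0.
  have xS := MS _ Mxn0; have Gp := G_pos T xS.
  rewrite QG //.
  have -> : ln (M T x / (G T x * c)) = ln (M T x) - ln (G T x * c).
    by apply: ln_div; rewrite posrE // mulr_gt0.
  have -> : ln (G T x * c) = ln (G T x) + ln c by apply: lnM; rewrite posrE.
  ring.
have G0 y : 0 <= G T y.
  by have [yS|yS] := boolP (y \in S); [exact: ltW (G_pos T yS) | rewrite ffunE (negbTE yS)].
have [g1 g2] := @gibbs R _ (M T) (G T) M0 G0 M1 (G_prob T).2 (fun y hy => G_pos T (MS y hy)).
apply/ffunP => x; apply: g2; apply/le_anti/andP; split => //.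
move: hle; rewrite eq1; lra.
Qed.

Local Notation lm := (lf zm).
Definition Smin : {set path} := [set y in S | lf y == lm].

Lemma lmin_eq : lmin N E l x0 xN = lm%:E.
Proof.
rewrite /lmin (bigmin_eq_arg _ zm) //; last by move=> i _; exact: leey.
case: arg_minP => // i iS h; have := h zm zmS; rewrite lee_fin => h1.
by have h2 := zm_min iS; congr EFin; apply/le_anti; rewrite h1 h2.
Qed.

Lemma Smin_card : (0 < #|Smin|)%N.
Proof. by apply/card_gt0P; exists zm; rewrite inE zmS eqxx. Qed.

Lemma SminS y : y \in Smin -> y \in S.
Proof. by rewrite inE => /andP[]. Qed.

Lemma ew_cvg0 (a : R) : 0 <= a ->
  expR (- a / T) @[T --> 0^'+] --> ((if a == 0 then 1 else 0) : R).
Proof.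
rewrite le_eqVlt => /orP[/eqP <-|a0].
  rewrite eqxx; have -> : (fun T : R => expR (- 0 / T)) = fun=> 1.
    by apply: funext => T; rewrite oppr0 mul0r expR0.
  exact: cvg_cst.
rewrite gt_eqF //.
apply: (@squeeze_cvgr _ _ _ _ (fun=> 0) (fun T => T / a)).
- near=> T.
  have T0 : 0 < T by near: T; exact: nbhs_right_gt.
  rewrite expR_ge0 /=.
  have u0 : 0 < a / T by rewrite divr_gt0.
  have h : a / T <= expR (a / T) by have := expR_ge1Dx (a / T); lra.
  rewrite mulNr expRN -(invf_div a T) lef_pV2 ?posrE ?expR_gt0 //.
- exact: cvg_cst.
- have : (fun T => T / a) T @[T --> 0] --> 0 / a.
    by apply: cvgM; [exact: cvg_id | exact: cvg_cst].
  rewrite mul0r; exact: cvg_at_right_filter.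
Unshelve. all: by end_near.
Qed.

Lemma ew_cvgy (a : R) : expR (- a / T) @[T --> +oo] --> (1 : R).
Proof.
rewrite -expR0; apply: continuous_cvg; first exact: continuous_expR.
rewrite -(mulr0 (- a)); apply: cvgM; first exact: cvg_cst.
apply/gtr0_cvgV0; first exact: nbhs_pinfty_gt.
exact: cvg_id.
Qed.


Lemma G_out T y : y \notin S -> G T y = 0.
Proof. by move=> yS; rewrite ffunE (negbTE yS). Qed.

Lemma G_cvg0 y : G T y @[T --> 0^'+] --> U Smin y.
Proof.
have [yS|yS] := boolP (y \in S); last first.
  have -> : (fun T => G T y) = fun=> 0 by apply: funext => T; rewrite G_out.
  rewrite ffunE ifF; first exact: cvg_cst.
  by apply/negbTE; apply: contra yS; exact: SminS.
pose e' T z := expR (- (lf z - lm) / T).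
have -> : (fun T => G T y) = fun T => e' T y / \sum_(z in S) e' T z.
  apply: funext => T; rewrite ffunE yS /ZS /ew /e'.
  have eq z : expR (- lf z / T) = expR (- (lf z - lm) / T) * expR (- lm / T).
    by rewrite -expRD; congr expR; rewrite !mulNr -opprD -mulrDl subrK.
  under eq_bigr do rewrite eq.
  rewrite eq -mulr_suml invfM mulrACA divff ?gt_eqF ?expR_gt0 // mulr1.
  done.
have hz z : z \in S -> e' T z @[T --> 0^'+] --> ((lf z == lm)%:R : R).
  move=> zS; have := @ew_cvg0 (lf z - lm); rewrite subr_ge0 zm_min // subr_eq0.
  by move=> /(_ isT); case: (lf z == lm).
have hs : \sum_(z in S) e' T z @[T --> 0^'+] --> (#|Smin|%:R : R).
  have e : \sum_(z in S) ((lf z == lm)%:R : R) = #|Smin|%:R.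
    rewrite (eq_bigr (fun z => if lf z == lm then 1 else 0)); last by move=> z _; case: (lf z == lm).
    rewrite -big_mkcondr sumr_const; apply/eqP; rewrite eqr_nat; apply/eqP.
    by apply: eq_card; move=> z; rewrite [RHS]inE unfold_in.
  by rewrite -e; apply: cvg_sumr.
have Sm0 : (#|Smin|%:R : R) != 0.
  by rewrite pnatr_eq0 -lt0n Smin_card.
have h1 := hz _ yS; rewrite ffunE inE yS /=.
have h3 : (fun T => e' T y / \sum_(z in S) e' T z) =
   (e'^~ y \* unstable.inv_fun (fun T => \sum_(z in S) e' T z)) by [].
rewrite h3.
case: (lf y == lm) h1 => /= h1.
  rewrite -[X in _ --> X]mul1r. have h2 := (@cvgM _ _ _ _ _ _ _ _ h1 (@cvgV _ _ _ _ _ _ Sm0 hs)). exact: (h2 _ _).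
rewrite -[X in _ --> X](mul0r (#|Smin|%:R^-1 : R)).
have h2 := (@cvgM _ _ _ _ _ _ _ _ h1 (@cvgV _ _ _ _ _ _ Sm0 hs)). exact: (h2 _ _).
Qed.

Lemma G_cvgy y : G T y @[T --> +oo] --> U S y.
Proof.
have [yS|yS] := boolP (y \in S); last first.
  have -> : (fun T => G T y) = fun=> 0 by apply: funext => T; rewrite G_out.
  rewrite ffunE ifF; [exact: cvg_cst | exact/negbTE].
have -> : (fun T => G T y) = fun T => ew T y / ZS T.
  by apply: funext => T; rewrite ffunE yS.
have hs : ZS T @[T --> +oo] --> (#|S|%:R : R).
  have e : \sum_(z in S) (1 : R) = #|S|%:R by rewrite sumr_const.
  by rewrite -e; apply: cvg_sumr => z _; exact: ew_cvgy.
have S0 : (#|S|%:R : R) != 0 by rewrite pnatr_eq0 -lt0n S_card.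
have h1 := ew_cvgy (lf y).
rewrite ffunE yS -[X in _ --> X]mul1r.
have h2 := (@cvgM _ _ _ _ _ _ _ _ h1 (@cvgV _ _ _ _ _ _ S0 hs)). exact: (h2 _ _).
Qed.

Lemma M_near0 (M : R -> {ffun path -> R}) :
  (forall T, 0 < T -> KL_minimizer x0 xN (boltz N E l T) (M T)) ->
  forall y, M T y @[T --> 0^'+] --> U Smin y.
Proof.
move=> HM y; apply: cvg_trans (G_cvg0 y); apply: near_eq_cvg.
near=> T; have T0 : 0 < T by near: T; exact: nbhs_right_gt.
by rewrite (@M_eq M T T0 (HM T T0)).
Unshelve. all: by end_near.
Qed.

Lemma M_neary (M : R -> {ffun path -> R}) :
  (forall T, 0 < T -> KL_minimizer x0 xN (boltz N E l T) (M T)) ->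
  forall y, M T y @[T --> +oo] --> U S y.
Proof.
move=> HM y; apply: cvg_trans (G_cvgy y); apply: near_eq_cvg.
near=> T; have T0 : 0 < T by near: T; exact: nbhs_pinfty_gt.
by rewrite (@M_eq M T T0 (HM T T0)).
Unshelve. all: by end_near.
Qed.


Lemma lpath_ge0 (x : path) : (0 <= lpath E l x)%E.
Proof. by rewrite /lpath; case: ifP => fx //; rewrite lee_fin lf_ge0. Qed.

Lemma avg_supp (P : {ffun path -> R}) : (forall x, 0 <= P x) ->
  (forall x, P x != 0 -> feasible E x) -> avg_len E l P = (\sum_x lf x * P x)%:E.
Proof.
move=> P0 Pf; rewrite /avg_len -sumEFin; apply: eq_bigr => x _.
have [->|Px] := eqVneq (P x) 0; first by rewrite mule0 mulr0.
by rewrite /lpath (Pf _ Px).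
Qed.

Lemma avg_feas (P : {ffun path -> R}) (r : R) : (forall x, 0 <= P x) ->
  avg_len E l P = r%:E -> forall x, P x != 0 -> feasible E x.
Proof.
move=> P0 hr x Px; apply/negPn/negP => fx.
have Pp : 0 < P x by rewrite lt0r Px P0.
have : (lpath E l x * (P x)%:E <= avg_len E l P)%E.
  rewrite /avg_len (bigD1 x) //= leeDl //; apply: sume_ge0 => y _.
  by apply: mule_ge0; [exact: lpath_ge0 | rewrite lee_fin].
by rewrite hr /lpath (negbTE fx) mulyr gtr0_sg // mul1e leye_eq.
Qed.

Definition V T := \sum_x lf x * G T x.

Lemma V_eq T : V T = (\sum_(x in S) lf x * ew T x) / ZS T.
Proof.
rewrite /V mulr_suml (bigID (fun x => x \in S)) /= [X in _ + X]big1 ?addr0.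
  by apply: eq_bigr => x xS; rewrite ffunE xS mulrA.
by move=> x xS; rewrite G_out ?mulr0.
Qed.

Lemma frac_lt (a b c d : R) : 0 < b -> 0 < d -> a * d < c * b -> a / b < c / d.
Proof.
move=> b0 d0 h; rewrite -subr_gt0.
have -> : c / d - a / b = (c * b - a * d) / (b * d) by field; rewrite !gt_eqF.
by rewrite divr_gt0 ?mulr_gt0 // subr_gt0.
Qed.

Hypothesis noncst : exists y z, [/\ y \in S, z \in S & lf y != lf z].

Lemma V_lt T1 T2 : 0 < T1 -> T1 < T2 -> V T1 < V T2.
Proof.
move=> T10 T12; have T20 : 0 < T2 by apply: lt_trans T12.
rewrite !V_eq; apply: frac_lt; try exact: ZS_gt0.
apply: (@sym_ineq R _ (fun x => x \in S) lf (ew T2) (ew T1)) => //.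
move=> y z yS zS ayz; rewrite /ew -!expRD ltr_expR.
have hi : T2^-1 < T1^-1 by rewrite ltf_pV2 ?posrE.
have : 0 < (lf y - lf z) * (T1^-1 - T2^-1) by rewrite mulr_gt0 // subr_gt0.
rewrite /= !mulNr; nra.
Qed.

Definition mean := (\sum_(y in S) lf y) / #|S|%:R.

Lemma V_lt_mean T : 0 < T -> V T < mean.
Proof.
move=> T0; rewrite V_eq /mean; apply: frac_lt; first exact: ZS_gt0.
  by rewrite ltr0n S_card.
have h := @sym_ineq R _ (fun x => x \in S) lf (fun=> (1 : R)) (ew T).
have e1 : \sum_(z in S) (1:R) = #|S|%:R by rewrite sumr_const.
have e2 : \sum_(y in S) lf y * 1 = \sum_(y in S) lf y by apply: eq_bigr => y _; rewrite mulr1.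
rewrite -e1 -e2 /ZS; apply: h => //; move=> y z yS zS ayz; rewrite /ew !mul1r ltr_expR !mulNr ltrN2.
by rewrite ltr_pM2r // invr_gt0.
Qed.

Lemma V_gt_lm T : lm < V T.
Proof.
have [y1 [y1S ne]] : exists y1, y1 \in S /\ lf y1 != lm.
  case: noncst => y [z [yS zS yz]]; have [e|ne] := eqVneq (lf y) lm.
    by exists z; split => //; rewrite -e eq_sym.
  by exists y.
have Z0 := ZS_gt0 T.
rewrite V_eq -subr_gt0.
have -> : (\sum_(x in S) lf x * ew T x) / ZS T - lm =
          (\sum_(x in S) (lf x - lm) * ew T x) / ZS T.
  rewrite /ZS; under [in RHS]eq_bigr do rewrite mulrBl.
  rewrite sumrB -mulr_sumr; field; rewrite gt_eqF //.
apply: divr_gt0 => //.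
have t0 x : x \in S -> 0 <= (lf x - lm) * ew T x.
  by move=> xS; rewrite mulr_ge0 ?expR_ge0 // subr_ge0 zm_min.
apply: lt_le_trans (@sum_ge_term R _ (fun x => x \in S) (fun x => (lf x - lm) * ew T x) y1 y1S t0).
rewrite mulr_gt0 ?expR_gt0 // subr_gt0 lt_neqAle eq_sym ne zm_min //.
Qed.


Lemma sumU (A : {set path}) (f : path -> R) :
  \sum_x f x * U A x = (\sum_(x in A) f x) / #|A|%:R.
Proof.
rewrite mulr_suml [RHS]big_mkcond /=; apply: eq_bigr => x _.
by rewrite ffunE; case: ifP; rewrite ?mulr0 ?mul0r.
Qed.

Lemma V_cvg0 : V T @[T --> 0^'+] --> lm.
Proof.
have -> : lm = \sum_x lf x * U Smin x.
  rewrite sumU (eq_bigr (fun=> lm)); last by move=> x; rewrite inE => /andP[_ /eqP].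
  rewrite sumr_const -[_ *+ _]mulr_natr mulfK // pnatr_eq0 -lt0n; exact: Smin_card.
apply: (@cvg_sumr R R _ _ _ predT) => x _.
by apply: cvgM; [exact: cvg_cst | exact: G_cvg0].
Qed.

Lemma V_cvgy : V T @[T --> +oo] --> mean.
Proof.
have -> : mean = \sum_x lf x * U S x by rewrite sumU.
apply: (@cvg_sumr R R _ _ _ predT) => x _.
by apply: cvgM; [exact: cvg_cst | exact: G_cvgy].
Qed.

Lemma ew_cont (x : R) z : x != 0 -> ew T z @[T --> x] --> ew x z.
Proof.
move=> x0n; apply: continuous_cvg; first exact: continuous_expR.
apply: cvgM; first exact: cvg_cst.
exact: inv_continuous.
Qed.

Lemma V_cont (x : R) : 0 < x -> V T @[T --> x] --> V x.
Proof.
move=> xp; have -> : V = fun T => (\sum_(z in S) lf z * ew T z) / ZS T.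
  by apply: funext => T; rewrite V_eq.
have xn : x != 0 by rewrite gt_eqF.
apply: cvgM.
  apply: (@cvg_sumr R R _ _ _ (fun z => z \in S)) => z _.
  by apply: cvgM; [exact: cvg_cst | exact: ew_cont].
apply: cvgV; first by rewrite gt_eqF // ZS_gt0.
by apply: (@cvg_sumr R R _ _ _ (fun z => z \in S)) => z _; exact: ew_cont.
Qed.


Lemma maxent (Q P : {ffun path -> R}) (A : {set path}) (al be : R) :
  is_prob Q -> is_prob P ->
  (forall x, x \in A -> 0 < Q x /\ ln (Q x) = al + be * lf x) ->
  (forall x, Q x != 0 -> x \in A) -> (forall x, P x != 0 -> x \in A) ->
  \sum_x lf x * P x = \sum_x lf x * Q x -> entropy P <= entropy Q.
Proof.
move=> Qp Pp hA QA PA hL.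
have key (P' : {ffun path -> R}) : is_prob P' -> (forall x, P' x != 0 -> x \in A) ->
    \sum_x P' x * ln (Q x) = al + be * \sum_x lf x * P' x.
  move=> [P0 P1] P'A; rewrite -[al]mulr1 -P1 mulr_sumr mulr_sumr -big_split /=.
  apply: eq_bigr => x _; have [->|Px] := eqVneq (P' x) 0; first by rewrite !mul0r !mulr0 addr0.
  by rewrite (hA _ (P'A _ Px)).2; ring.
have [g1 _] := @gibbs R _ P Q Pp.1 Qp.1 Pp.2 Qp.2 (fun x hx => (hA _ (PA x hx)).1).
have kP := key P Pp PA; have kQ := key Q Qp QA.
rewrite /entropy kQ; move: g1; rewrite kP hL; lra.
Qed.

Lemma sumU_Smin : \sum_x lf x * U Smin x = lm.
Proof.
rewrite sumU (eq_bigr (fun=> lm)); last by move=> x; rewrite inE => /andP[_ /eqP].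
rewrite sumr_const -[_ *+ _]mulr_natr mulfK // pnatr_eq0 -lt0n; exact: Smin_card.
Qed.

Lemma U_feas (A : {set path}) x : {subset A <= S} -> U A x != 0 -> feasible E x.
Proof. by move=> AS /U_supp /AS; rewrite inS => /and3P[]. Qed.

Lemma G_feas T x : G T x != 0 -> feasible E x.
Proof. by move=> /G_supp; rewrite inS => /and3P[]. Qed.

Lemma U_Q (A : {set path}) x : (0 < #|A|)%N -> x \in A ->
  0 < U A x /\ ln (U A x) = - ln (#|A|%:R) + 0 * lf x.
Proof.
move=> A0 xA; rewrite ffunE xA mul0r addr0; have h : (0 : R) < #|A|%:R by rewrite ltr0n.
by split; [rewrite invr_gt0 | rewrite lnV // posrE].
Qed.

Lemma G_Q T x : x \in S -> 0 < G T x /\ ln (G T x) = - ln (ZS T) + (- T^-1) * lf x.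
Proof.
move=> xS; split; first exact: G_pos.
rewrite ffunE xS ln_div ?posrE ?expR_gt0 ?ZS_gt0 // expRK; ring.
Qed.

Lemma supp_Smin (P : {ffun path -> R}) : is_prob P -> (forall x, P x != 0 -> x \in S) ->
  \sum_x lf x * P x = lm -> forall x, P x != 0 -> x \in Smin.
Proof.
move=> [P0 P1] PS hL.
have t0 x : 0 <= (lf x - lm) * P x.
  have [->|Px] := eqVneq (P x) 0; first by rewrite mulr0.
  by rewrite mulr_ge0 // subr_ge0 zm_min // PS.
have : \sum_x (lf x - lm) * P x = 0.
  under eq_bigr do rewrite mulrBl; rewrite sumrB hL -mulr_sumr P1 mulr1 subrr //.
move=> /eqP; rewrite psumr_eq0; last by move=> x _; exact: t0.
move=> /allP h x Px; have := h x (mem_index_enum x); rewrite mulf_eq0 (negbTE Px) orbF subr_eq0.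
by move=> e; rewrite inE PS.
Qed.


Variable M : R -> {ffun path -> R}.
Hypothesis HM : forall T, 0 < T -> KL_minimizer x0 xN (boltz N E l T) (M T).

Lemma Mext0 : Mext M 0%:E = U Smin.
Proof.
rewrite /Mext eqxx; apply/ffunP => y; rewrite ffunE.
by apply: cvg_lim => //; exact: M_near0.
Qed.

Lemma MextP r : 0 < r -> Mext M r%:E = G r.
Proof. by move=> r0; rewrite /Mext gt_eqF // (@M_eq M r r0 (HM r r0)). Qed.

Lemma Mexty : Mext M +oo%E = U S.
Proof.
rewrite /Mext; apply/ffunP => y; rewrite ffunE.
by apply: cvg_lim => //; exact: M_neary.
Qed.

Definition W (T : \bar R) : R :=
  match T with EFin r => if r == 0 then lm else V r | +oo%E => mean | -oo%E => 0 end.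

Lemma U_ge0 (A : {set path}) x : 0 <= U A x.
Proof. by rewrite ffunE; case: ifP => // _; rewrite invr_ge0 ler0n. Qed.

Lemma avg_Mext T : (0 <= T)%E -> avg_len E l (Mext M T) = (W T)%:E.
Proof.
case: T => [r||] //; rewrite ?lee_fin => r0.
- have [->|rn] := eqVneq r 0.
    rewrite Mext0 /W eqxx avg_supp ?sumU_Smin //; first exact: U_ge0.
    by move=> x; apply: U_feas => y; exact: SminS.
  have rp : 0 < r by rewrite lt0r rn.
  rewrite MextP // /W (negbTE rn) avg_supp //; first by move=> x; exact: (G_prob r).1.
  by move=> x; exact: G_feas.
- rewrite Mexty /W avg_supp ?sumU //; first exact: U_ge0.
  by move=> x; apply: U_feas.
Qed.

Lemma adm_Mext T : (0 <= T)%E -> admissible x0 xN (Mext M T).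
Proof.
case: T => [r||] //; rewrite ?lee_fin => r0.
- have [->|rn] := eqVneq r 0.
    rewrite Mext0; apply: supp_adm; first exact: U_prob Smin_card.
    by move=> x /U_supp; exact: SminS.
  have rp : 0 < r by rewrite lt0r rn.
  by rewrite MextP //; apply: supp_adm; [exact: G_prob | exact: G_supp].
- rewrite Mexty; apply: supp_adm; first exact: U_prob S_card.
  by move=> x /U_supp.
Qed.

Lemma adm_inS (P : {ffun path -> R}) (r : R) : admissible x0 xN P ->
  avg_len E l P = r%:E -> forall x, P x != 0 -> x \in S.
Proof.
move=> Pa hP x Px; have fx := avg_feas Pa.1.1 hP x Px.
by have [h1 h2] := adm_supp x Pa Px; rewrite inS fx h1 h2 !eqxx.
Qed.

Lemma ent_Mext T (P : {ffun path -> R}) : (0 <= T)%E -> admissible x0 xN P ->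
  avg_len E l P = (W T)%:E -> entropy P <= entropy (Mext M T).
Proof.
move=> T0 Pa hP.
have PS := adm_inS Pa hP.
have hL : \sum_x lf x * P x = W T.
  by apply/EFin_inj; rewrite -hP avg_supp //; [exact: Pa.1.1 | move=> x /PS; rewrite inS => /and3P[]].
move: T T0 hL hP => [r||] //; rewrite ?lee_fin => r0 hL hP.
- have [e|rn] := eqVneq r 0.
    rewrite e Mext0; rewrite e /W eqxx in hL.
    apply: (@maxent _ _ Smin (- ln (#|Smin|%:R)) 0) => //.
    + exact: U_prob Smin_card.
    + exact: Pa.1.
    + by move=> x; apply: U_Q; exact: Smin_card.
    + by move=> x /U_supp.
    + exact: supp_Smin Pa.1 PS hL.
    + by rewrite sumU_Smin.
  have rp : 0 < r by rewrite lt0r rn.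
  rewrite /W (negbTE rn) in hL; rewrite MextP //.
  apply: (@maxent _ _ S (- ln (ZS r)) (- r^-1)) => //.
  + exact: G_prob.
  + exact: Pa.1.
  + by move=> x; apply: G_Q.
  + by move=> x; apply: G_supp.
- rewrite Mexty; apply: (@maxent _ _ S (- ln (#|S|%:R)) 0) => //.
  + exact: U_prob S_card.
  + exact: Pa.1.
  + by move=> x; apply: U_Q; exact: S_card.
  + by move=> x /U_supp.
  + by rewrite sumU.
Qed.


Lemma part_i y : y \in S -> (lmin N E l x0 xN < (lf y)%:E)%E -> M T y @[T --> 0^'+] --> 0.
Proof.
rewrite lmin_eq lte_fin => yS hy; have := @M_near0 M HM y.
by rewrite ffunE ifF //; apply/negbTE; rewrite inE yS /= gt_eqF.
Qed.

Lemma part_ii y : M T y @[T --> +oo] --> (if y \in S then #|S|%:R^-1 else 0 : R).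
Proof. by have := @M_neary M HM y; rewrite ffunE. Qed.

Lemma V_inj r1 r2 : 0 < r1 -> 0 < r2 -> V r1 = V r2 -> r1 = r2.
Proof.
move=> p1 p2 e; case: (ltgtP r1 r2) => // h.
- by have := @V_lt r1 r2 p1 h; rewrite e ltxx.
- by have := @V_lt r2 r1 p2 h; rewrite e ltxx.
Qed.

Lemma W_inj T1 T2 : (0 <= T1)%E -> (0 <= T2)%E -> W T1 = W T2 -> T1 = T2.
Proof.
have lmm : lm < mean := lt_trans (V_gt_lm 1) (@V_lt_mean 1 ltr01).
move: T1 T2 => [r1||] [r2||] //; rewrite ?lee_fin /W => h1 h2.
- have [e1|n1] := eqVneq r1 0; have [e2|n2] := eqVneq r2 0.
  + by rewrite e1 e2.
  + have p2 : 0 < r2 by rewrite lt0r n2.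
    by have := V_gt_lm r2 => h e; move: h; rewrite -e ltxx.
  + have p1 : 0 < r1 by rewrite lt0r n1.
    by have := V_gt_lm r1 => h e; move: h; rewrite e ltxx.
  + have p1 : 0 < r1 by rewrite lt0r n1.
    have p2 : 0 < r2 by rewrite lt0r n2.
    by move=> e; rewrite (@V_inj r1 r2 p1 p2 e).
- case: eqP => [_|n1] e.
    by move: lmm; rewrite e ltxx.
  have p1 : 0 < r1 by rewrite lt0r h1 andbT; apply/eqP.
  by have := @V_lt_mean r1 p1; rewrite e ltxx.
- case: eqP => [_|n2] e.
    by move: lmm; rewrite e ltxx.
  have p2 : 0 < r2 by rewrite lt0r h2 andbT; apply/eqP.
  by have := @V_lt_mean r2 p2; rewrite e ltxx.
Qed.

Lemma W_ex Lbar : lm <= Lbar -> Lbar <= mean -> exists T, (0 <= T)%E /\ W T = Lbar.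
Proof.
rewrite le_eqVlt => /orP[/eqP e|hlm].
  by exists 0%:E; split => //; rewrite /W eqxx.
rewrite le_eqVlt => /orP[/eqP e|hLm].
  by exists +oo%E; split.
have [T1 [hT1 T1p]] : exists T1, V T1 < Lbar /\ 0 < T1.
  have : \forall T \near 0^'+, V T < Lbar /\ 0 < T.
    near=> T; split.
      near: T; exact: (cvgr_lt _ V_cvg0).
    near: T; exact: nbhs_right_gt.
  move=> h; case: (@filter_ex _ _ (at_right_proper_filter 0) _ h) => T1 hT; by exists T1.
have [T2 [hT2 T2p]] : exists T2, Lbar < V T2 /\ 0 < T2.
  have : \forall T \near +oo, Lbar < V T /\ 0 < T.
    near=> T; split.
      near: T; exact: (cvgr_gt _ V_cvgy).
    near: T; exact: nbhs_pinfty_gt.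
  move=> h; case: (@filter_ex _ _ proper_pinfty_nbhs _ h) => T2 hT; by exists T2.
have T12 : T1 < T2.
  rewrite ltNge; apply/negP => h; move: h; rewrite le_eqVlt => /orP[/eqP e|h].
    by move: hT1; rewrite -e => h'; have := lt_trans h' hT2; rewrite ltxx.
  by have := @V_lt T2 T1 T2p h => h'; have := lt_trans (lt_trans hT1 hT2) h'; rewrite ltxx.
have V12 := @V_lt T1 T2 T1p T12.
have cont : {within `[T1, T2], continuous V}.
  apply: continuous_in_subspaceT => x; rewrite inE /= in_itv /= => /andP[hx _].
  exact: (@V_cont x (lt_le_trans T1p hx)).
have hv : Num.min (V T1) (V T2) <= Lbar <= Num.max (V T1) (V T2).
  have -> : Num.min (V T1) (V T2) = V T1 by apply/min_idPl; exact: ltW.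
  have -> : Num.max (V T1) (V T2) = V T2 by apply/max_idPr; exact: ltW.
  by rewrite !ltW.
have [c] := IVT (ltW T12) cont hv.
rewrite in_itv /= => /andP[hc _] Vc; exists c%:E; split.
  by rewrite lee_fin; apply: ltW; exact: lt_le_trans T1p hc.
by rewrite /W gt_eqF //; exact: lt_le_trans T1p hc.
Unshelve. all: by end_near.
Qed.

Lemma part_iii Lbar : (lmin N E l x0 xN <= Lbar%:E)%E -> Lbar <= mean ->
  exists T : \bar R,
    [/\ (0 <= T)%E,
        avg_len E l (Mext M T) = Lbar%:E,
        (forall T' : \bar R, (0 <= T')%E -> avg_len E l (Mext M T') = Lbar%:E -> T' = T),
        admissible x0 xN (Mext M T)
      & (forall P : {ffun path -> R}, admissible x0 xN P -> avg_len E l P = Lbar%:E ->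
           entropy P <= entropy (Mext M T))].
Proof.
rewrite lmin_eq lee_fin => hlm hLm.
have [T [T0 WT]] := @W_ex Lbar hlm hLm.
exists T; split => //.
- by rewrite avg_Mext // WT.
- move=> T' T'0 h; apply: W_inj => //; apply: EFin_inj.
  by rewrite -avg_Mext // h WT.
- exact: adm_Mext.
- by move=> P Pa hP; apply: ent_Mext => //; rewrite hP WT.
Qed.

End Main.

Unset Implicit Arguments.

Theorem theorem4 (R : realType) (n N : nat) (E : rel 'I_n)
  (l : 'I_n -> 'I_n -> R) (x0 xN : 'I_n)
  (M : R -> {ffun {ffun 'I_N.+1 -> 'I_n} -> R}) :
  (0 < N)%N ->
  (forall i j, E i j -> 0 <= l i j) ->
  (0 < #|paths_between N E x0 xN|)%N ->
  (forall T, 0 < T -> KL_minimizer x0 xN (boltz N E l T) (M T)) ->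
  [/\ (* (i) *)
      (forall y, y \in paths_between N E x0 xN -> (lmin N E l x0 xN < (lfin l y)%:E)%E ->
         M T y @[T --> 0^'+] --> 0),
      (* (ii) *)
      (forall y, M T y @[T --> +oo] -->
         (if y \in paths_between N E x0 xN then #|paths_between N E x0 xN|%:R^-1 else 0 : R))
    & (* (iii) *)
      (1 < #|paths_between N E x0 xN|)%N ->
      (exists y z, [/\ y \in paths_between N E x0 xN, z \in paths_between N E x0 xN
                     & lfin l y != lfin l z]) ->
      forall Lbar : R,
        (lmin N E l x0 xN <= Lbar%:E)%E ->
        Lbar <= (\sum_(y in paths_between N E x0 xN) lfin l y) / #|paths_between N E x0 xN|%:R ->
        exists T : \bar R,
          [/\ (0 <= T)%E,
              avg_len E l (Mext M T) = Lbar%:E,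
              (forall T' : \bar R, (0 <= T')%E -> avg_len E l (Mext M T') = Lbar%:E -> T' = T),
              admissible x0 xN (Mext M T)
            & (forall P : {ffun {ffun 'I_N.+1 -> 'I_n} -> R}, admissible x0 xN P -> avg_len E l P = Lbar%:E ->
                 entropy P <= entropy (Mext M T))]].
Proof.
move=> N0 l0 S0 HM.
have [z0 z0S] : exists z0, z0 \in paths_between N E x0 xN by apply/card_gt0P.
case: (arg_minP (fun y => lfin l y) z0S) => zm zmS zmin.
split.
- by move=> y yS hy; exact (part_i zmS zmin M HM yS hy).
- by move=> y; exact (part_ii zmS M HM y).
- move=> _ noncst Lbar h1 h2.
  exact (part_iii l0 zmS zmin noncst M HM Lbar h1 h2).
Qed.
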